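(* Assume the cost function $\mathbf{c}$ satisfies the Principle of Near-Optimality (PONO). Let $Q$ be a finite nonempty set of tables, let $\alpha_i\ge 1$, and run the Representative-Tradeoffs dynamic program (RTA) with internal precision $\alpha_i$, producing sets $\mathcal{P}^q\subseteq \mathcal{A}(q)$ for all nonempty $q\subseteq Q$ (the order in which splits, operators and sub-plans are enumerated is arbitrary). Then for every nonempty $q\subseteq Q$ and every plan $p^*\in\mathcal{A}(q)$ there exists $p\in\mathcal{P}^q$ with $\mathbf{c}(p)\preceq_{\alpha_i^{|q|}}\mathbf{c}(p^* )$. In particular $\mathcal{P}^Q$ is an $\alpha_i^{|Q|}$-approximate Pareto set for $Q$.
   Context: Fix a finite set $\mathbb{O}$ of $l\ge1$ objectives and a finite set $\mathbb{J}$ of join operators. For each table $t$ there is a finite nonempty set $\mathcal{A}(\{t\})$ of scan plans (access paths). For a set $q$ of tables with $|q|\ge2$, the plan space $\mathcal{A}(q)$ consists of all plans $\mathrm{Combine}(j,p_1,p_2)$ where $q=q_1\dot\cup q_2$ with $q_1,q_2$ nonempty, $j\in\mathbb{J}$, $p_1\in\mathcal{A}(q_1)$, $p_2\in\mathcal{A}(q_2)$; $p_1,p_2$ are the sub-plans. Each plan $p$ has a cost vector $\mathbf{c}(p)\in\mathbb{R}_{\ge0}^{\mathbb{O}}$. For vectors, $\mathbf{c}_1\preceq\mathbf{c}_2$ means $\mathbf{c}_1^o\le\mathbf{c}_2^o$ for all $o\in\mathbb{O}$, and $\mathbf{c}_1\preceq_\alpha\mathbf{c}_2$ means $\mathbf{c}_1^o\le\alpha\,\mathbf{c}_2^o$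 for all $o$. PONO: for all $\alpha\ge1$, $j\in\mathbb{J}$ and plans with $\mathbf{c}(p_L^* )\preceq_\alpha\mathbf{c}(p_L)$, $\mathbf{c}(p_R^* )\preceq_\alpha\mathbf{c}(p_R)$ (where $p_L,p_L^*$ produce the same table set, as do $p_R,p_R^*$), one has $\mathbf{c}(\mathrm{Combine}(j,p_L^*,p_R^* ))\preceq_\alpha\mathbf{c}(\mathrm{Combine}(j,p_L,p_R))$. Procedure $\mathrm{Prune}(\mathcal{P},p_N,\alpha_i)$: if there is no $p\in\mathcal{P}$ with $\mathbf{c}(p)\preceq_{\alpha_i}\mathbf{c}(p_N)$, then delete from $\mathcal{P}$ every $p$ with $\mathbf{c}(p_N)\preceq\mathbf{c}(p)$ and then insert $p_N$; otherwise $\mathcal{P}$ is unchanged. RTA: for each table $t\in Q$, start with $\mathcal{P}^{\{t\}}=\emptyset$ and call $\mathrm{Prune}(\mathcal{P}^{\{t\}},p_N,\alpha_i)$ for every $p_N\in\mathcal{A}(\{t\})$; then for $k=2,\dots,|Q|$ and every $q\subseteq Q$ with $|q|=k$, start with $\mathcal{P}^q=\emptyset$ and, for every split $q=q_1\dot\cup q_2$ into nonempty parts, every $p_1\in\mathcal{P}^{q_1}$, $p_2\in\mathcal{P}^{q_2}$, $j\in\mathbb{J}$, call $\mathrm{Prune}(\mathcal{P}^q,\mathrm{Combine}(j,p_1,p_2),\alpha_i)$. An $\alpha$-approximate Pareto set for $q$ is a set of plans for $q$ containing, for every plan $p^*\in\mathcal{A}(q)$ (equivalently every Pareto-optimal one),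 a plan $p$ with $\mathbf{c}(p)\preceq_\alpha\mathbf{c}(p^* )$. *)

(* Defs.v *)
From HB Require Import structures.
From mathcomp Require Import all_boot all_order all_algebra.
Set Implicit Arguments. Unset Strict Implicit. Unset Printing Implicit Defensive.
Import Order.TTheory GRing.Theory Num.Theory.

(* Query plans: T = tables, J = join operators, S = access paths (scan kinds). *)
Inductive plan (T J S : Type) : Type :=
| Scan of T & S
| Combine of J & plan T J S & plan T J S.
Arguments Scan {T J S}.
Arguments Combine {T J S}.

Section PlanEq.
Variables (T J S : eqType).
Fixpoint plan_eqb (p q : plan T J S) : bool :=
  match p, q with
  | Scan t a, Scan t' a' => (t == t') && (a == a')
  | Combine j p1 p2, Combine j' q1 q2 =>
      [&& j == j', plan_eqb p1 q1 & plan_eqb p2 q2]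
  | _, _ => false
  end.
Lemma plan_eqP : Equality.axiom plan_eqb.
Proof.
elim=> [t a|j p1 IH1 p2 IH2] [t' a'|j' q1 q2] /=; try by constructor.
- by apply: (iffP andP) => [[/eqP-> /eqP->]|[-> ->]].
- apply: (iffP and3P) => [[/eqP-> /IH1-> /IH2->]|[-> <- <-]] //.
  by split=> //; [apply/IH1|apply/IH2].
Qed.
HB.instance Definition _ := hasDecEq.Build (plan T J S) plan_eqP.
End PlanEq.

Section Plans.
Variables (T : finType) (J : finType) (S : eqType).

Fixpoint tables (p : plan T J S) : {set T} :=
  match p with
  | Scan t _ => [set t]
  | Combine _ p1 p2 => tables p1 :|: tables p2
  end.

(* well-formedness: scans use admissible access paths, joins combine
   plans on disjoint table sets (which are automatically nonempty). *)
Fixpoint valid (scans : T -> seq S) (p : plan T J S) : bool :=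
  match p with
  | Scan t a => a \in scans t
  | Combine _ p1 p2 =>
      [&& valid scans p1, valid scans p2 & [disjoint tables p1 & tables p2]]
  end.

Definition inA (scans : T -> seq S) (q : {set T}) (p : plan T J S) : bool :=
  valid scans p && (tables p == q).
End Plans.

Section Costs.
Variables (R : realFieldType) (O : finType).
Local Open Scope ring_scope.

Definition dom (c1 c2 : O -> R) : bool := [forall o, c1 o <= c2 o].
Definition adom (alpha : R) (c1 c2 : O -> R) : bool :=
  [forall o, c1 o <= alpha * c2 o].

Variables (T J : finType) (S : eqType).
Variable (c : plan T J S -> O -> R).

Definition PONO (scans : T -> seq S) : Prop :=
  forall (alpha : R) (j : J) (pL pLs pR pRs : plan T J S),
    1 <= alpha ->
    valid scans pL -> valid scans pLs -> valid scans pR -> valid scans pRs ->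
    [disjoint tables pL & tables pR] ->
    tables pLs = tables pL -> tables pRs = tables pR ->
    adom alpha (c pLs) (c pL) -> adom alpha (c pRs) (c pR) ->
    adom alpha (c (Combine j pLs pRs)) (c (Combine j pL pR)).

Definition prune (alpha : R) (P : seq (plan T J S)) (pN : plan T J S)
  : seq (plan T J S) :=
  if has (fun p => adom alpha (c p) (c pN)) P then P
  else pN :: filter (fun p => ~~ dom (c pN) (c p)) P.

Definition candidates (P : {set T} -> seq (plan T J S)) (q : {set T})
  : seq (plan T J S) :=
  flatten [seq flatten [seq [seq Combine j p1 p2 | p2 <- P (q :\: q1), j <- enum J]
                       | p1 <- P q1]
          | q1 <- enum [set q1 in powerset q | (q1 != set0) && (q1 != q)]].

(* P is the output of RTA on Q with internal precision alpha, for some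
   arbitrary enumeration order of the candidates at each table set. *)
Definition RTA_output (scans : T -> seq S) (alpha : R) (Q : {set T})
  (P : {set T} -> seq (plan T J S)) : Prop :=
  (forall t, t \in Q -> exists2 s,
       perm_eq s [seq Scan t a | a <- scans t] &
       P [set t] = foldl (prune alpha) [::] s) /\
  (forall q : {set T}, q \subset Q -> (2 <= #|q|)%N -> exists2 s,
       perm_eq s (candidates P q) &
       P q = foldl (prune alpha) [::] s).

Definition approx_pareto (scans : T -> seq S) (alpha : R) (q : {set T})
  (P : seq (plan T J S)) : Prop :=
  all (inA scans q) P /\
  forall ps, inA scans q ps -> exists2 p, p \in P & adom alpha (c p) (c ps).
End Costs.

(* Main.v *)
Require Import Defs.
From HB Require Import structures.
From mathcomp Require Import all_boot all_order all_algebra.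
From mathcomp Require Import zify.
Import Order.TTheory GRing.Theory Num.Theory.
Local Open Scope ring_scope.

Section Aux.
Variables (R : realFieldType) (O T J : finType) (S : eqType).
Variable (c : plan T J S -> O -> R).
Hypothesis c_ge0 : forall p o, 0 <= c p o.

Lemma adom_refl a p : 1 <= a -> adom a (c p) (c p).
Proof. move=> a1; apply/forallP=> o; rewrite -{1}(mul1r (c p o)); exact: ler_wpM2r. Qed.

Lemma dom_adom a p q x : dom (c p) (c q) -> adom a (c q) (c x) -> adom a (c p) (c x).
Proof. move=> /forallP H1 /forallP H2; apply/forallP=> o; exact: le_trans (H1 o) (H2 o). Qed.

Lemma adom_mono a b p x : a <= b -> adom a (c p) (c x) -> adom b (c p) (c x).
Proof. move=> ab /forallP H; apply/forallP=> o; apply: le_trans (H o) _; exact: ler_wpM2r. Qed.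

Lemma adom_comp a b p q x : 0 <= a -> adom a (c p) (c q) -> adom b (c q) (c x) ->
  adom (a * b) (c p) (c x).
Proof.
move=> a0 /forallP H1 /forallP H2; apply/forallP=> o; apply: le_trans (H1 o) _.
by rewrite -mulrA; apply: ler_wpM2l.
Qed.

Lemma prune_keep a P0 pN x : (exists2 p, p \in P0 & adom a (c p) (c x)) ->
  exists2 p, p \in prune c a P0 pN & adom a (c p) (c x).
Proof.
case=> p pin H; rewrite /prune; case: ifP => _; first by exists p.
case D: (dom (c pN) (c p)).
  by exists pN; [rewrite inE eqxx | exact: dom_adom D H].
by exists p => //; rewrite inE mem_filter D pin orbT.
Qed.

Lemma prune_new a P0 pN : 1 <= a -> exists2 p, p \in prune c a P0 pN & adom a (c p) (c pN).
Proof.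
move=> a1; rewrite /prune; case: ifP => [/hasP[p ??]|_]; first by exists p.
by exists pN; [rewrite inE eqxx | exact: adom_refl].
Qed.

Lemma fold_cover a s P0 x : 1 <= a ->
  (x \in s \/ exists2 p, p \in P0 & adom a (c p) (c x)) ->
  exists2 p, p \in foldl (prune c a) P0 s & adom a (c p) (c x).
Proof.
move=> a1; elim: s P0 => [|y s IH] P0 /=; first by case=> //.
move=> H; apply: IH; rewrite inE in H; case: H => [/orP[/eqP->|xs]|H].
- by right; exact: prune_new.
- by left.
- by right; exact: prune_keep.
Qed.

Lemma prune_sub a P0 pN x : x \in prune c a P0 pN -> x \in P0 \/ x = pN.
Proof.
rewrite /prune; case: ifP => _; first by left.
by rewrite inE mem_filter => /orP[/eqP->|/andP[_ ->]]; [right|left].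
Qed.

Lemma fold_sub a s P0 x : x \in foldl (prune c a) P0 s -> x \in P0 \/ x \in s.
Proof.
elim: s P0 => [|y s IH] P0 /=; first by left.
move=> /IH[/prune_sub[H|->]|H]; rewrite inE ?eqxx ?H ?orbT; by [left|right|right].
Qed.

End Aux.

Section Sets.
Variables (T J : finType) (S : eqType).

Lemma tables_n0 (p : plan T J S) : tables p != set0.
Proof.
elim: p => [t a|j p1 IH1 p2 _] /=; first by apply/set0Pn; exists t; rewrite inE.
case/set0Pn: IH1 => x xi; apply/set0Pn; exists x; by rewrite inE xi.
Qed.

Lemma cand_mem (P : {set T} -> seq (plan T J S)) q x :
  x \in candidates P q -> exists q1 : {set T}, exists p1, exists p2, exists j,
   [/\ q1 \subset q, q1 != set0, q1 != q, p1 \in P q1 & p2 \in P (q :\: q1)] /\ x = Combine j p1 p2.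
Proof.
move=> /flattenP[s /mapP[q1 q1in ->]] /flattenP[s' /mapP[p1 p1in ->]] /allpairsP[[p2 j] [/= p2in _ ->]].
move: q1in; rewrite mem_enum inE powersetE => /andP[q1q /andP[n0 nq]].
by exists q1, p1, p2, j; split.
Qed.

Lemma mem_cand (P : {set T} -> seq (plan T J S)) (q q1 : {set T}) p1 p2 (j : J) :
  q1 \subset q -> q1 != set0 -> q1 != q -> p1 \in P q1 -> p2 \in P (q :\: q1) ->
  Combine j p1 p2 \in candidates P q.
Proof.
move=> q1q n0 nq p1in p2in; apply/flattenP.
exists (flatten [seq [seq Combine j p1 p2 | p2 <- P (q :\: q1), j <- enum J] | p1 <- P q1]).
  by apply/mapP; exists q1 => //; rewrite mem_enum inE powersetE q1q n0 nq.
apply/flattenP; exists [seq Combine j p1 p2 | p2 <- P (q :\: q1), j <- enum J].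
  by apply/mapP; exists p1.
by apply/allpairsP; exists (p2, j); rewrite /= mem_enum.
Qed.

End Sets.

Lemma split_card {T : finType} {q q1 : {set T}} :
  q1 \subset q -> q1 != set0 -> q1 != q ->
  [/\ (#|q1| + #|q :\: q1| = #|q|)%N, (0 < #|q1|)%N, (0 < #|q :\: q1|)%N & q :\: q1 != set0].
Proof.
move=> sq n0 nq.
have e : q :&: q1 = q1 by apply/setIidPr.
have d0 : q :\: q1 != set0.
  by rewrite setD_eq0; apply: contra nq => H; rewrite eqEsubset sq H.
split=> //; first by rewrite -(cardsID q1 q) e.
- by rewrite card_gt0.
- by rewrite card_gt0.
Qed.

Theorem theorem3 (R : realFieldType) (O T J : finType) (S : eqType)
  (scans : T -> seq S) (c : plan T J S -> O -> R)
  (Q : {set T}) (alpha : R) (P : {set T} -> seq (plan T J S)) :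
  (0 < #|O|)%N ->
  (forall t, scans t != [::]) ->
  (forall t, uniq (scans t)) ->
  (forall p o, 0 <= c p o) ->
  PONO c scans ->
  Q != set0 ->
  1 <= alpha ->
  RTA_output c scans alpha Q P ->
  (forall q : {set T}, q \subset Q -> q != set0 ->
     forall ps, inA scans q ps ->
       exists2 p, p \in P q & adom (alpha ^+ #|q|) (c p) (c ps)) /\
  approx_pareto c scans (alpha ^+ #|Q|) Q (P Q).
Proof.
move=> _ _ _ c0 pono Qn0 a1 [H1 H2].
have a0 : 0 <= alpha by apply: le_trans a1.
have V : forall n (q : {set T}), (#|q| <= n)%N -> q \subset Q -> q != set0 -> all (inA scans q) (P q).
  elim=> [|n IH] q qn qQ q0.
    by move: q0; rewrite -card_gt0; case: #|q| qn.
  have [/cards1P[t Et]|q2] : (#|q| == 1)%N \/ (2 <= #|q|)%N.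
      by move: q0; rewrite -card_gt0; case: #|q| => [|[|k]] //; [left|right].
    subst q; have tQ : t \in Q by apply: (subsetP qQ t); rewrite inE.
    case: (H1 t tQ) => s ps ->; apply/allP => x /fold_sub[//|].
    rewrite (perm_mem ps) => /mapP[a ain ->].
    by rewrite /inA /= ain eqxx.
  case: (H2 q qQ q2) => s ps ->; apply/allP => x /fold_sub[//|].
  rewrite (perm_mem ps) => /cand_mem[q1 [p1 [p2 [j [[sq n0 nq p1in p2in] ->]]]]].
  case: (split_card (T:=T) sq n0 nq) => ecard g1 g2 d0.
  have l1 : (#|q1| <= n)%N by move: qn ecard g2; clear; lia.
  have l2 : (#|q :\: q1| <= n)%N by move: qn ecard g1; clear; lia.
  have /allP/(_ _ p1in)/andP[v1 /eqP t1] := IH q1 l1 (subset_trans sq qQ) n0.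
  have /allP/(_ _ p2in)/andP[v2 /eqP t2] :=
    IH (q :\: q1) l2 (subset_trans (subsetDl _ _) qQ) d0.
  rewrite /inA /= v1 v2 t1 t2 /=; apply/andP; split.
    by rewrite -setI_eq0; apply/eqP/setP => y; rewrite !inE; case: (y \in q1); rewrite ?andbF.
  apply/eqP/setP => y; rewrite !inE; case: (boolP (y \in q1)) => //= h; by rewrite (subsetP sq _ h).
have V' : forall q : {set T}, q \subset Q -> q != set0 -> all (inA scans q) (P q).
  by move=> q; apply: (V #|q|).
have M : forall ps (q : {set T}), q \subset Q -> inA scans q ps ->
    exists2 p, p \in P q & adom (alpha ^+ #|q|) (c p) (c ps).
  elim=> [t a|j pL IHL pR IHR] q qQ /andP[v /eqP tq].
    rewrite -tq /= cards1 expr1.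
    have tQ : t \in Q by apply: (subsetP qQ t); rewrite -tq /= inE.
    case: (H1 t tQ) => s ps ->; apply: fold_cover => //; left.
    by rewrite (perm_mem ps); apply: map_f; exact: v.
  move: v => /= /and3P[vL vR dj].
  set q1 := tables pL; set q2 := tables pR.
  have sq1 : q1 \subset q by rewrite -tq subsetUl.
  have sq2 : q2 \subset q by rewrite -tq subsetUr.
  case: (IHL q1 (subset_trans sq1 qQ)) => [|pLs pLin HL]; first by rewrite /inA vL eqxx.
  case: (IHR q2 (subset_trans sq2 qQ)) => [|pRs pRin HR]; first by rewrite /inA vR eqxx.
  have n1 : q1 != set0 by apply: tables_n0.
  have nq : q1 != q.
    apply/eqP => E; move: (@tables_n0 _ _ _ pR); case/set0Pn => x xR.
    have : x \in q1 by rewrite E -tq inE xR orbT.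
    by move/(disjointFr dj); rewrite xR.
  have eD : q :\: q1 = q2.
    by rewrite -tq setDUl setDv set0U; apply/setDidPl; rewrite disjoint_sym.
  have ecard : (#|q1| + #|q2| = #|q|)%N.
    by rewrite -eD; case: (split_card (T:=T) sq1 n1 nq).
  have g1 : (0 < #|q1|)%N by rewrite card_gt0.
  have g2 : (0 < #|q2|)%N by rewrite card_gt0 (@tables_n0 _ _ _ pR).
  have /andP[vLs /eqP tLs] := allP (V' q1 (subset_trans sq1 qQ) n1) _ pLin.
  have /andP[vRs /eqP tRs] := allP (V' q2 (subset_trans sq2 qQ) (@tables_n0 _ _ _ pR)) _ pRin.
  set m := (#|q|.-1)%N.
  have am : 1 <= alpha ^+ m by apply: exprn_ege1.
  have HL' : adom (alpha ^+ m) (c pLs) (c pL).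
    by apply: adom_mono HL => //; apply: ler_weXn2l => //; move: ecard g1 g2; rewrite /m; clear; lia.
  have HR' : adom (alpha ^+ m) (c pRs) (c pR).
    by apply: adom_mono HR => //; apply: ler_weXn2l => //; move: ecard g1 g2; rewrite /m; clear; lia.
  have PC := pono (alpha ^+ m) j pL pLs pR pRs am vL vLs vR vRs dj tLs tRs HL' HR'.
  have q2c : (2 <= #|q|)%N by move: ecard g1 g2; clear; lia.
  case: (H2 q qQ q2c) => s ps Pq.
  have [p pin Hp] : exists2 p, p \in P q & adom alpha (c p) (c (Combine j pLs pRs)).
    rewrite Pq; apply: fold_cover => //; left; rewrite (perm_mem ps).
    have pRin' : pRs \in P (q :\: q1) by rewrite eD.
    exact: (@mem_cand _ _ _ P q q1 pLs pRs j sq1 n1 nq pLin pRin').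
  exists p => //.
  have -> : #|q| = m.+1 by move: ecard g1 g2; rewrite /m; clear; lia.
  rewrite exprS; exact: adom_comp Hp PC.
split; first by move=> q qQ _ ps; apply: M.
split; first exact: V'.
by move=> ps; apply: M.
Qed.
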